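(* Let $(X,d)$ be a complete metric space and $\{f_{\eta_k}:\eta_k\in B^{[k]},k\in\mathbb{N}\}$ a binary tree of continuous maps $X\to X$. Suppose there is a nonempty compact $C\subseteq X$ with $f_{\eta_k}(C)\subseteq C$ for all finite codes $\eta_k$, that each $f_{\eta_k}$ is Lipschitz with constant $s_{\eta_k}$, and that $\sum_{k=1}^\infty\prod_{i=1}^k s_{\tau_i\eta}<\infty$ for every $\eta\in B^{[\infty]}$. Then the set $$U_{TM}=\bigcup_{\eta\in B^{[\infty]}}\lim_{k\to\infty}f_{\tau_1\eta}\circ\cdots\circ f_{\tau_{k-1}\eta}\circ f_{\tau_k\eta}(x)\subseteq C$$ is well defined (all the limits exist) and is the same set for every $x\in C$.
   Context: $B^{[k]}=\{1,2\}^k$ is the set of binary codes $\eta_k=(i_1\ldots i_k)$ of length $k$, $B^{[\infty]}=\{1,2\}^{\mathbb{N}}$ the set of infinite codes, and $\tau_\ell\eta=(i_1\ldots i_\ell)$ the truncation of $\eta$ to its first $\ell$ symbols. A binary tree of maps assigns to each finite code $\eta_k$ a continuous map $f_{\eta_k}:X\to X$. *)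

(* Defs.v *)
From Stdlib Require Import Reals List.
Open Scope R_scope.

(* Binary alphabet {1,2} is represented by [bool]. *)

Definition mopen (M : Metric_Space) (O : Base M -> Prop) : Prop :=
  forall x, O x -> exists r, r > 0 /\ forall y, dist M x y < r -> O y.

Definition mcompact (M : Metric_Space) (C : Base M -> Prop) : Prop :=
  forall (I : Type) (O : I -> Base M -> Prop),
    (forall i, mopen M (O i)) ->
    (forall x, C x -> exists i, O i x) ->
    exists l : list I, forall x, C x -> exists i, In i l /\ O i x.

Definition mcv (M : Metric_Space) (u : nat -> Base M) (z : Base M) : Prop :=
  forall eps, eps > 0 -> exists N, forall n, (n >= N)%nat -> dist M (u n) z < eps.

Definition mcauchy (M : Metric_Space) (u : nat -> Base M) : Prop :=
  forall eps, eps > 0 -> exists N, forall n m, (n >= N)%nat -> (m >= N)%nat ->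
    dist M (u n) (u m) < eps.

Definition mcomplete (M : Metric_Space) : Prop :=
  forall u, mcauchy M u -> exists z, mcv M u z.

Definition mcontinuous (M : Metric_Space) (g : Base M -> Base M) : Prop :=
  forall x eps, eps > 0 -> exists delta, delta > 0 /\
    forall y, dist M x y < delta -> dist M (g x) (g y) < eps.

Definition lipschitz (M : Metric_Space) (g : Base M -> Base M) (s : R) : Prop :=
  0 <= s /\ forall x y, dist M (g x) (g y) <= s * dist M x y.

(* tau_k eta = (i_1 ... i_k): the first k symbols of the infinite code eta
   (eta 0 is i_1). *)
Definition trunc (eta : nat -> bool) (k : nat) : list bool := map eta (seq 0 k).

(* treecomp f eta k x = f_{tau_1 eta} o ... o f_{tau_k eta} (x)  (identity for k = 0). *)
Fixpoint treecomp {X : Type} (f : list bool -> X -> X) (eta : nat -> bool) (k : nat) (x : X) : X :=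
  match k with
  | O => x
  | S k' => treecomp f eta k' (f (trunc eta (S k')) x)
  end.

Fixpoint prodS (s : list bool -> R) (eta : nat -> bool) (k : nat) : R :=
  match k with
  | O => 1
  | S k' => prodS s eta k' * s (trunc eta (S k'))
  end.

Definition U_TM (M : Metric_Space) (f : list bool -> Base M -> Base M) (x : Base M)
  (z : Base M) : Prop :=
  exists eta : nat -> bool, mcv M (fun k => treecomp f eta k x) z.

(* Main.v *)
Require Import Defs.
From Stdlib Require Import Reals List Lra Lia Classical.
Open Scope R_scope.

Lemma trunc_nnil (eta : nat -> bool) k : trunc eta (S k) <> nil.
Proof. unfold trunc; simpl; discriminate. Qed.

Lemma compact_bounded (M : Metric_Space) (C : Base M -> Prop) (x0 : Base M) :
  C x0 -> mcompact M C ->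
  exists D, D > 0 /\ forall y y', C y -> C y' -> dist M y y' <= D.
Proof.
  intros Hx0 HC.
  destruct (HC (Base M) (fun a y => dist M a y < 1)) as [l Hl].
  - intros a y Hy. exists (1 - dist M a y). split; [lra|].
    intros y' Hy'. pose proof (dist_tri M a y' y). lra.
  - intros y _. exists y. assert (dist M y y = 0) by (apply dist_refl; reflexivity). lra.
  - set (B := fold_right (fun a acc => dist M a x0 + acc) 0 l).
    assert (HB : forall a, In a l -> dist M a x0 <= B).
    { unfold B; clear Hl; induction l as [|b l IH]; simpl; intros a Ha; [contradiction|].
      assert (0 <= fold_right (fun a acc => dist M a x0 + acc) 0 l).
      { clear IH Ha; induction l; simpl; [lra|]. pose proof (dist_pos M a0 x0); lra. }
      destruct Ha as [<-|Ha].
      - lra.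
      - pose proof (IH a Ha). pose proof (dist_pos M b x0). lra. }
    assert (Hy : forall y, C y -> dist M y x0 < 1 + B).
    { intros y Cy. destruct (Hl y Cy) as [a [Ha Hd]].
      pose proof (HB a Ha). pose proof (dist_tri M y x0 a). rewrite (dist_sym M y a) in H0. lra. }
    exists (2 * (1 + B) + 1). split.
    + pose proof (Hy x0 Hx0). pose proof (dist_pos M x0 x0). lra.
    + intros y y' Cy Cy'. pose proof (Hy y Cy). pose proof (Hy y' Cy').
      pose proof (dist_tri M y y' x0). rewrite (dist_sym M x0 y') in H1. lra.
Qed.

Lemma compact_closed (M : Metric_Space) (C : Base M -> Prop) (u : nat -> Base M) (z : Base M) :
  mcompact M C -> (forall k, C (u k)) -> mcv M u z -> C z.
Proof.
  intros HC Hu Hcv. destruct (classic (C z)) as [|Hz]; [assumption|exfalso].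
  destruct (HC nat (fun n y => dist M y z > / INR (S n))) as [l Hl].
  - intros n y Hy. exists (dist M y z - / INR (S n)). split; [lra|].
    intros y' Hy'. pose proof (dist_tri M y z y'). lra.
  - intros y Cy. assert (y <> z) by (intros ->; contradiction).
    assert (dist M y z > 0).
    { pose proof (dist_pos M y z). destruct (Req_dec (dist M y z) 0) as [e|e]; [|lra].
      apply dist_refl in e; contradiction. }
    destruct (archimed_cor1 (dist M y z)) as [N [HN1 HN2]]; [lra|].
    destruct N as [|n]; [lia|]. exists n. lra.
  - set (N := fold_right max 0%nat l).
    assert (HN : forall n, In n l -> (n <= N)%nat).
    { unfold N; clear Hl; induction l as [|b l IH]; simpl; intros n Hn; [contradiction|].
      destruct Hn as [<-|Hn]; [lia|]. pose proof (IH n Hn); lia. }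
    assert (Hpos : 0 < / INR (S N)) by (apply Rinv_0_lt_compat; apply lt_0_INR; lia).
    destruct (Hcv _ Hpos) as [K HK].
    specialize (HK K (le_n K)).
    destruct (Hl (u K) (Hu K)) as [n [Hn Hd]].
    assert (/ INR (S N) <= / INR (S n)).
    { apply Rinv_le_contravar; [apply lt_0_INR; lia|]. apply le_INR. pose proof (HN n Hn); lia. }
    lra.
Qed.

Fixpoint Ps (s : list bool -> R) (eta : nat -> bool) (n : nat) : R :=
  match n with O => 0 | S n' => Ps s eta n' + prodS s eta n' end.

Lemma Ps_eq s eta n : Ps s eta (S (S n)) = 1 + sum_f_R0 (fun j => prodS s eta (S j)) n.
Proof.
  induction n.
  - simpl. ring.
  - change (Ps s eta (S (S (S n)))) with (Ps s eta (S (S n)) + prodS s eta (S (S n))).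
    rewrite IHn. simpl. ring.
Qed.

Lemma Ps_cv s eta l : Un_cv (fun n => sum_f_R0 (fun j => prodS s eta (S j)) n) l ->
  Un_cv (Ps s eta) (1 + l).
Proof.
  intros H eps Heps. destruct (H eps Heps) as [N HN]. exists (S (S N)).
  intros n Hn. destruct n as [|[|m]]; try lia. rewrite Ps_eq.
  unfold R_dist. replace (1 + sum_f_R0 (fun j => prodS s eta (S j)) m - (1 + l))
    with (sum_f_R0 (fun j => prodS s eta (S j)) m - l) by ring.
  apply HN. lia.
Qed.

Theorem mainTheorem2 (M : Metric_Space) (f : list bool -> Base M -> Base M)
  (s : list bool -> R) (C : Base M -> Prop) :
  mcomplete M ->
  (forall c, c <> nil -> mcontinuous M (f c)) ->
  (exists x0, C x0) ->
  mcompact M C ->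
  (forall c x, c <> nil -> C x -> C (f c x)) ->
  (forall c, c <> nil -> lipschitz M (f c) (s c)) ->
  (forall eta : nat -> bool, exists l,
      Un_cv (fun n => sum_f_R0 (fun j => prodS s eta (S j)) n) l) ->
  (forall x, C x -> forall eta : nat -> bool, exists z, mcv M (fun k => treecomp f eta k x) z)
  /\ (forall x y, C x -> C y -> forall z, U_TM M f x z <-> U_TM M f y z)
  /\ (forall x, C x -> forall z, U_TM M f x z -> C z).
Proof.
  intros Hcomp _ [x0 Hx0] HC HfC Hlip Hser.
  destruct (compact_bounded M C x0 Hx0 HC) as [D [HD HDb]].
  assert (TC : forall eta k x, C x -> C (treecomp f eta k x)).
  { intros eta k; induction k; intros x Cx; simpl; [assumption|].
    apply IHk, HfC; [apply trunc_nnil|assumption]. }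
  assert (Pnn : forall eta k, 0 <= prodS s eta k).
  { intros eta k; induction k; simpl; [lra|].
    apply Rmult_le_pos; [assumption|]. apply (proj1 (Hlip _ (trunc_nnil eta k))). }
  assert (Tlip : forall eta k u v,
    dist M (treecomp f eta k u) (treecomp f eta k v) <= prodS s eta k * dist M u v).
  { intros eta k; induction k; intros u v; simpl; [lra|].
    eapply Rle_trans; [apply IHk|]. rewrite Rmult_assoc.
    apply Rmult_le_compat_l; [apply Pnn|]. apply (proj2 (Hlip _ (trunc_nnil eta k))). }
  assert (Hstep : forall eta k x, C x ->
    dist M (treecomp f eta (S k) x) (treecomp f eta k x) <= D * prodS s eta k).
  { intros eta k x Cx. simpl. eapply Rle_trans; [apply Tlip|].
    rewrite Rmult_comm. apply Rmult_le_compat_r; [apply Pnn|].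
    apply HDb; [apply HfC; [apply trunc_nnil|]|]; assumption. }
  assert (Htele : forall eta x, C x -> forall m d,
    dist M (treecomp f eta (m + d)%nat x) (treecomp f eta m x) <= D * (Ps s eta (m + d)%nat - Ps s eta m)).
  { intros eta x Cx m d; induction d.
    - rewrite Nat.add_0_r. assert (dist M (treecomp f eta m x) (treecomp f eta m x) = 0)
        by (apply dist_refl; reflexivity). lra.
    - rewrite Nat.add_succ_r.
      pose proof (dist_tri M (treecomp f eta (S (m + d)%nat) x) (treecomp f eta m x) (treecomp f eta (m + d)%nat x)).
      pose proof (Hstep eta (m + d)%nat x Cx). simpl Ps. lra. }
  assert (Hprod0 : forall eta eps, eps > 0 -> exists N, forall k, (k >= N)%nat ->
     D * prodS s eta k < eps).
  { intros eta eps Heps. destruct (Hser eta) as [l Hl].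
    assert (He : eps / D / 2 > 0) by (unfold Rdiv; apply Rmult_lt_0_compat;
       [apply Rmult_lt_0_compat; [lra|apply Rinv_0_lt_compat; lra]|lra]).
    destruct (Ps_cv s eta l Hl _ He) as [N HN]. exists N. intros k Hk.
    pose proof (HN k Hk) as H1. pose proof (HN (S k) ltac:(lia)) as H2.
    unfold R_dist in H1, H2. apply Rabs_def2 in H1. apply Rabs_def2 in H2.
    simpl Ps in H2. assert (prodS s eta k < eps / D) by lra.
    apply Rmult_lt_compat_l with (r := D) in H; [|lra].
    replace (D * (eps / D)) with eps in H by (field; lra). exact H. }
  assert (Hmove : forall eta x y z, C x -> C y ->
     mcv M (fun k => treecomp f eta k x) z -> mcv M (fun k => treecomp f eta k y) z).
  { intros eta x y z Cx Cy Hcv eps Heps.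
    destruct (Hcv (eps/2) ltac:(lra)) as [N1 HN1].
    destruct (Hprod0 eta (eps/2) ltac:(lra)) as [N2 HN2].
    exists (max N1 N2). intros k Hk.
    pose proof (HN1 k ltac:(lia)). pose proof (HN2 k ltac:(lia)).
    pose proof (dist_tri M (treecomp f eta k y) z (treecomp f eta k x)).
    pose proof (Tlip eta k y x). pose proof (HDb y x Cy Cx).
    assert (prodS s eta k * dist M y x <= prodS s eta k * D)
      by (apply Rmult_le_compat_l; [apply Pnn|assumption]).
    lra. }
  split; [|split].
  - intros x Cx eta. apply Hcomp. intros eps Heps.
    destruct (Hser eta) as [l Hl].
    assert (He : eps / D / 2 > 0) by (unfold Rdiv; apply Rmult_lt_0_compat;
       [apply Rmult_lt_0_compat; [lra|apply Rinv_0_lt_compat; lra]|lra]).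
    destruct (Ps_cv s eta l Hl _ He) as [N HN]. exists N.
    assert (Hgen : forall n m, (n >= N)%nat -> (m >= N)%nat -> (m <= n)%nat ->
       dist M (treecomp f eta n x) (treecomp f eta m x) < eps).
    { intros n m Hn Hm Hmn. replace n with (m + (n - m))%nat by lia.
      eapply Rle_lt_trans; [apply Htele; assumption|].
      replace (m + (n - m))%nat with n by lia.
      pose proof (HN n Hn) as H1. pose proof (HN m Hm) as H2.
      unfold R_dist in H1, H2. apply Rabs_def2 in H1. apply Rabs_def2 in H2.
      assert (Ps s eta n - Ps s eta m < eps / D) by lra.
      apply Rmult_lt_compat_l with (r := D) in H; [|lra].
      replace (D * (eps / D)) with eps in H by (field; lra). exact H. }
    intros n m Hn Hm. destruct (Nat.le_ge_cases m n).
    + apply Hgen; assumption.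
    + rewrite dist_sym. apply Hgen; assumption.
  - intros x y Cx Cy z; split; intros [eta Hcv]; exists eta.
    + apply (Hmove eta x); assumption.
    + apply (Hmove eta y); assumption.
  - intros x Cx z [eta Hcv]. apply (compact_closed M C (fun k => treecomp f eta k x) z HC); [|exact Hcv].
    intros k; apply TC; assumption.
Qed.
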